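(* Let $n$ be a positive integer and $v$ an odd positive integer, let $q=v^{1/n}$, assume $q\ge3$, and put $m=\left\lfloor\frac{q-1}{2}\right\rfloor$. Then there exists a $\left(q^n,\ m^nq^n,\ m^n(q^n-2^n),\ q^n\right)$ placement delivery array, which realizes a coded caching scheme with $K=q^n$ users, memory ratio $\frac{M}{N}=1-\left(\frac{2}{q}\right)^n$, subpacketization $m^nq^n$, and transmission load $R=m^{-n}$.
   Context: A $(K,F,Z,S)$ placement delivery array (PDA) is an $F\times K$ array $\mathbf{P}=(p_{j,k})$ with entries from $\{*\}\cup\{1,\dots,S\}$ such that: (C1) each column contains exactly $Z$ stars; (C2) each integer of $\{1,\dots,S\}$ occurs at least once; (C3) for any two distinct entries $p_{j_1,k_1}=p_{j_2,k_2}=s$ (an integer) we have $j_1\neq j_2$, $k_1\neq k_2$, and $p_{j_1,k_2}=p_{j_2,k_1}=*$. A $(K,M,N)$ coded caching system consists of a server storing $N$ equal-size files and $K$ users each with a cache of size $M$ files, connected by an error-free shared broadcast link. An $F$-division scheme splits each file into $F$ equal-size packets placed (uncoded) in caches independently of demands; in delivery each user requests one file and the server broadcasts XORs of packets so every user decodes its request. The load $R$ is the worst-case normalized broadcast size; $M/N$ is the memory ratio. A $(K,F,Z,S)$ PDA realizes an $F$-division scheme with $M/N=Z/F$ and $R=S/F$. *)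

(* Defs.v *)
From HB Require Import structures.
From mathcomp Require Import all_boot all_order all_algebra.
From mathcomp Require Import all_classical all_reals all_analysis.
Set Implicit Arguments. Unset Strict Implicit. Unset Printing Implicit Defensive.
Import Order.TTheory GRing.Theory Num.Theory.

(* A (K,F,Z,S) placement delivery array: an F x K array whose entries are
   either a star (None) or an integer s with 1 <= s <= S (Some s).
   Rows are indexed by 'I_F, columns by 'I_K. *)
Definition is_PDA (K F Z S : nat) (P : 'I_F -> 'I_K -> option nat) : Prop :=
  (forall j k s, P j k = Some s -> (1 <= s <= S)%N) /\
  (forall k : 'I_K, #|[set j : 'I_F | P j k == None]| = Z) /\
  (forall s, (1 <= s <= S)%N -> exists j k, P j k = Some s) /\
  (forall (j1 j2 : 'I_F) (k1 k2 : 'I_K) (s : nat),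
      (j1, k1) <> (j2, k2) -> P j1 k1 = Some s -> P j2 k2 = Some s ->
      [/\ j1 <> j2, k1 <> k2, P j1 k2 = None & P j2 k1 = None]).
Arguments is_PDA : clear implicits.

(* Main.v *)
Require Import Defs.
From HB Require Import structures.
From mathcomp Require Import all_boot all_order all_algebra.
From mathcomp Require Import all_classical all_reals all_analysis.
From mathcomp Require Import ring lra zify.
Import Order.TTheory GRing.Theory Num.Theory.
Set Implicit Arguments. Unset Strict Implicit. Unset Printing Implicit Defensive.
Local Open Scope ring_scope.
Definition enc (p : int) (n : nat) (z : 'I_n -> int) : int :=
  \sum_(i < n) z i * p ^+ i.

Lemma encS p n (z : 'I_n.+1 -> int) :
  enc p z = z ord0 + p * enc p (fun i => z (lift ord0 i)).
Proof.
rewrite /enc big_ord_recl expr0 mulr1; congr (_ + _).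
rewrite big_distrr; apply: eq_bigr => i _ /=.
by rewrite exprS mulrCA.
Qed.

Lemma enc_bound (m : nat) n (z : 'I_n -> int) :
  (forall i, - (2 * m)%:Z <= z i <= (2 * m)%:Z) ->
  - ((2 * m + 1)%:Z ^+ n - 1) <= enc (2 * m + 1)%:Z z <= (2 * m + 1)%:Z ^+ n - 1.
Proof.
elim: n z => [|n IH] z hz; first by rewrite /enc big_ord0 expr0 subrr oppr0 lexx.
rewrite encS exprS.
have /andP[l1 h1] := IH (fun i => z (lift ord0 i)) (fun i => hz _).
have /andP[l0 h0] := hz ord0.
set y := enc _ _ in l1 h1 *.
set P := _ ^+ n in l1 h1 *.
move: (z ord0) l0 h0 => z0 l0 h0.
have P0 : 0 <= P by rewrite exprn_ge0.
apply/andP; split; nia.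
Qed.

Lemma enc_zero (m : nat) n (z : 'I_n -> int) :
  (forall i, - (2 * m)%:Z <= z i <= (2 * m)%:Z) ->
  enc (2 * m + 1)%:Z z = 0 -> forall i, z i = 0.
Proof.
elim: n z => [|n IH] z hz; first by move=> _ [].
rewrite encS => e.
have /andP[l0 h0] := hz ord0.
have z0 : z ord0 = 0.
  move: (enc _ _) e => y e; move: (z ord0) l0 h0 e => z0 l0 h0 e.
  have [y1|[y1|y1]] : y = 0 \/ 1 <= y \/ y <= -1 by lia.
  - lia.
  - nia.
  - nia.
move: e; rewrite z0 add0r => /eqP; rewrite mulf_eq0 => /orP[|/eqP e].
  by move=> h; exfalso; move: h; lia.
have IH' := IH _ (fun i => hz _) e.
move=> i; case: (unliftP ord0 i) => [j ->|->] //.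
Qed.

Section Constr.
Variables (n m v : nat).
Hypothesis v0 : (0 < v)%N.
Hypothesis vodd : odd v.
Hypothesis m0 : (0 < m)%N.
Hypothesis pv : ((2 * m + 1) ^ n <= v)%N.

Local Notation A := {ffun 'I_n -> 'I_m}.
Local Notation Eps := {ffun 'I_n -> bool}.
Local Notation T := (A * 'I_v)%type.
Local Notation p := (2 * m + 1)%:Z.
Local Notation V := (v%:Z).

Definition sgn (b : bool) : int := if b then 1 else -1.
Definition xv (a : A) (e : Eps) : 'I_n -> int := fun i => sgn (e i) * (a i).+1%:Z.
Definition EE (a : A) (e : Eps) : int := enc p (xv a e).
Definition vl (j k : nat) : nat := ((j.*2 + (v - k)) %% v)%N.
Definition Q (t : T) (k : 'I_v) : option nat :=
  if [exists e : Eps, (V %| k%:Z - t.2%:Z - EE t.1 e)%Z]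
  then Some (vl t.2 k).+1 else None.

Lemma dvd_small x : (V %| x)%Z -> - V < x < V -> x = 0.
Proof.
case/dvdzP => c -> /andP[l h].
have [c0|[c1|c1]] : c = 0 \/ 1 <= c \/ c <= -1 by lia.
- by rewrite c0 mul0r.
- nia.
- nia.
Qed.

Lemma nat_of_dvd (x y : nat) : (x < v)%N -> (y < v)%N -> (V %| x%:Z - y%:Z)%Z -> x = y.
Proof.
move=> xv yv /dvd_small h.
have : x%:Z - y%:Z = 0 by apply: h; lia.
lia.
Qed.

Lemma modz_dvd x : (V %| (x %% V)%Z - x)%Z.
Proof.
have -> : (x %% V)%Z - x = - (x %/ V)%Z * V by rewrite {2}(divz_eq x V); ring.
by apply: dvdz_mull.
Qed.

Lemma jof_lt x : (absz (x %% V)%Z < v)%N.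
Proof.
have h1 : 0 <= (x %% V)%Z by apply: modz_ge0; lia.
have h2 : (x %% V)%Z < V by apply: ltz_pmod; lia.
lia.
Qed.

Definition jof x : 'I_v := Ordinal (jof_lt x).

Lemma jof_dvd x : (V %| (jof x)%:Z - x)%Z.
Proof.
have h1 : 0 <= (x %% V)%Z by apply: modz_ge0; lia.
rewrite /= gez0_abs //; exact: modz_dvd.
Qed.

Lemma dvd_comb (a b c : int) : (V %| a)%Z -> (V %| b)%Z -> c = a + b -> (V %| c)%Z.
Proof. by move=> ha hb ->; apply: rpredD. Qed.

Lemma dvd_combN (a b c : int) : (V %| a)%Z -> (V %| b)%Z -> c = a - b -> (V %| c)%Z.
Proof. by move=> ha hb ->; apply: rpredB. Qed.

Lemma dvd_scale (a c : int) (k : int) : (V %| a)%Z -> c = k * a -> (V %| c)%Z.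
Proof. by move=> ha ->; apply: dvdz_mull. Qed.

Lemma ord_of_dvd (j1 j2 : 'I_v) : (V %| j1%:Z - j2%:Z)%Z -> j1 = j2.
Proof. by move=> h; apply: val_inj; exact: (nat_of_dvd (ltn_ord j1) (ltn_ord j2) h). Qed.

Lemma jof_eq (j : 'I_v) x : (V %| x - j%:Z)%Z -> jof x = j.
Proof.
move=> h; apply: ord_of_dvd; apply: (dvd_comb (jof_dvd x) h); ring.
Qed.

Lemma half_dvd x : (V %| 2 * x)%Z -> (V %| x)%Z.
Proof.
rewrite Gauss_dvdzr //.
have : coprime v 2 by rewrite ?coprimen2 ?coprime2n.
by rewrite /coprimez /gcdz /= => /eqP ->.
Qed.

Lemma vl_dvd (j k : 'I_v) : (V %| (vl j k)%:Z - (2 * j%:Z - k%:Z))%Z.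
Proof.
rewrite /vl -modz_nat.
have -> : ((j.*2 + (v - k))%N)%:Z = 2 * j%:Z - k%:Z + V.
  have := ltn_ord k; lia.
apply: (dvd_comb (modz_dvd _) (dvdzz V)); ring.
Qed.

Lemma xv_bound a1 e1 a2 e2 i :
  - (2 * m)%:Z <= xv a1 e1 i - xv a2 e2 i <= (2 * m)%:Z.
Proof.
rewrite /xv /sgn; have := ltn_ord (a1 i); have := ltn_ord (a2 i).
case: (e1 i); case: (e2 i) => /= h1 h2; lia.
Qed.

Lemma enc_small (z : 'I_n -> int) :
  (forall i, - (2 * m)%:Z <= z i <= (2 * m)%:Z) -> (V %| enc p z)%Z -> enc p z = 0.
Proof.
move=> hz hd; apply: dvd_small => //.
have /andP[l h] := enc_bound hz.
have : p ^+ n <= V by rewrite -natz -natrX natz lez_nat.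
lia.
Qed.

Lemma encB (z1 z2 : 'I_n -> int) : enc p z1 - enc p z2 = enc p (fun i => z1 i - z2 i).
Proof. by rewrite /enc -sumrB; apply: eq_bigr => i _; rewrite mulrBl. Qed.

Lemma EE_inj a1 e1 a2 e2 : (V %| EE a1 e1 - EE a2 e2)%Z -> a1 = a2 /\ e1 = e2.
Proof.
rewrite /EE encB => /(enc_small (xv_bound a1 e1 a2 e2)) /enc_zero.
move=> /(_ (xv_bound a1 e1 a2 e2)) h.
have h' i : a1 i = a2 i /\ e1 i = e2 i.
  move: (h i); rewrite /xv /sgn.
  have := ltn_ord (a1 i); have := ltn_ord (a2 i).
  case: (e1 i); case: (e2 i) => /= h1 h2 H; split => //; try apply: val_inj => /=; lia.
by split; apply/ffunP => i; case: (h' i).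
Qed.


Lemma dvd_eq (a c : int) : (V %| a)%Z -> c = a -> (V %| c)%Z.
Proof. by move=> h ->. Qed.

Lemma Q_some t k s : Q t k = Some s ->
  exists e, (V %| k%:Z - t.2%:Z - EE t.1 e)%Z /\ s = (vl t.2 k).+1.
Proof. by rewrite /Q; case: existsP => [[e he]|] // [<-]; exists e. Qed.

Lemma Q_range t k s : Q t k = Some s -> (1 <= s <= v)%N.
Proof.
case/Q_some => e [_ ->]; rewrite ltn0Sn /= /vl ltn_pmod //.
Qed.

Lemma core a1 e1 (j1 k1 : 'I_v) a2 e2 (j2 k2 : 'I_v) :
  (V %| k1%:Z - j1%:Z - EE a1 e1)%Z -> (V %| k2%:Z - j2%:Z - EE a2 e2)%Z ->
  (V %| (2 * j1%:Z - k1%:Z) - (2 * j2%:Z - k2%:Z))%Z ->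
  (k1 = k2 <-> (a1, j1) = (a2, j2)).
Proof.
move=> h1 h2 hW; split.
- move=> ek; subst k2.
  have hE : (V %| 2 * (EE a1 e1 - EE a2 e2))%Z.
    have -> : 2 * (EE a1 e1 - EE a2 e2) =
      (-2) * ((k1%:Z - j1%:Z - EE a1 e1) - (k1%:Z - j2%:Z - EE a2 e2))
      - ((2 * j1%:Z - k1%:Z) - (2 * j2%:Z - k1%:Z)) by ring.
    by rewrite rpredB // dvdz_mull // rpredB.
  have [ea ee] := EE_inj (half_dvd hE); subst a2 e2.
  congr pair; apply: ord_of_dvd.
  have -> : j1%:Z - j2%:Z = - ((k1%:Z - j1%:Z - EE a1 e1) - (k1%:Z - j2%:Z - EE a1 e1)) by ring.
  by rewrite rpredN rpredB.
- case=> ea ej; subst a2 j2; apply: ord_of_dvd.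
  have -> : k1%:Z - k2%:Z = - ((2 * j1%:Z - k1%:Z) - (2 * j1%:Z - k2%:Z)) by ring.
  by rewrite rpredN.
Qed.

Lemma xv_b a e i : - m%:Z <= xv a e i <= m%:Z.
Proof.
rewrite /xv /sgn; have := ltn_ord (a i).
case: (e i) => /= h; lia.
Qed.

Lemma xv_ne0 a e i : xv a e i != 0.
Proof. rewrite /xv /sgn; case: (e i) => /=; lia. Qed.

Lemma cross a1 e1 (j1 k1 : 'I_v) a2 e2 (j2 k2 : 'I_v) :
  (V %| k1%:Z - j1%:Z - EE a1 e1)%Z -> (V %| k2%:Z - j2%:Z - EE a2 e2)%Z ->
  (V %| (2 * j1%:Z - k1%:Z) - (2 * j2%:Z - k2%:Z))%Z ->
  ((a1, j1), k1) <> ((a2, j2), k2) -> Q (a1, j1) k2 = None.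
Proof.
move=> h1 h2 hW ne; rewrite /Q /=; case: existsP => // [[d hd]]; exfalso.
pose z i := xv a2 e2 i - (if e1 i == d i then xv a1 e1 i else 0).
have ez : 2 * enc p z = 2 * EE a2 e2 - EE a1 e1 - EE a1 d.
  rewrite /EE /enc /z !big_distrr -!sumrB /=; apply: eq_bigr => i _.
  rewrite /xv /sgn; case: (e1 i); case: (d i) => /=; ring.
have hz : (V %| 2 * enc p z)%Z.
  rewrite ez.
  have -> : 2 * EE a2 e2 - EE a1 e1 - EE a1 d =
    (k1%:Z - j1%:Z - EE a1 e1) - 2 * (k2%:Z - j2%:Z - EE a2 e2)
    + ((2 * j1%:Z - k1%:Z) - (2 * j2%:Z - k2%:Z)) + (k2%:Z - j1%:Z - EE a1 d) by ring.
  apply: rpredD; last exact: hd. apply: rpredD; last exact: hW.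
  apply: rpredB; first exact: h1. exact: dvdz_mull.
have zb i : - (2 * m)%:Z <= z i <= (2 * m)%:Z.
  rewrite /z; have := xv_b a1 e1 i; have := xv_b a2 e2 i.
  case: (_ == _); lia.
have z0 := enc_zero zb (enc_small zb (half_dvd hz)).
have hx i : xv a2 e2 i = xv a1 e1 i.
  move: (z0 i); rewrite /z; case: eqP => _; first by lia.
  by move=> /eqP; rewrite subr0 (negbTE (xv_ne0 _ _ _)).
have eE : EE a1 e1 = EE a2 e2 by rewrite /EE /enc; apply: eq_bigr => i _; rewrite hx.
have ek : k1 = k2.
  apply: ord_of_dvd.
  have -> : k1%:Z - k2%:Z = 2 * (EE a1 e1 - EE a2 e2)
     + 2 * ((k1%:Z - j1%:Z - EE a1 e1) - (k2%:Z - j2%:Z - EE a2 e2))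
     + ((2 * j1%:Z - k1%:Z) - (2 * j2%:Z - k2%:Z)) by ring.
  rewrite {1}eE subrr mulr0 add0r; apply: rpredD; last exact: hW.
  by apply: dvdz_mull; apply: rpredB.
apply: ne; have [/(_ ek) -> _] := core h1 h2 hW; by rewrite ek.
Qed.


Lemma count_some (k : 'I_v) : #|[set t : T | Q t k != None]| = (m ^ n * 2 ^ n)%N.
Proof.
pose g (ae : A * Eps) : T := (ae.1, jof (k%:Z - EE ae.1 ae.2)).
have -> : [set t : T | Q t k != None] = g @: finset.setT.
  apply/setP => t; rewrite inE; apply/idP/imsetP.
  - rewrite /Q; case: existsP => // -[e he] _; exists (t.1, e) => //.
    case: t he => a j he /=; congr pair; symmetry; apply: jof_eq.
    by apply: (dvd_eq he); ring.
  - case=> -[a e] _ ->; rewrite /Q /=; case: existsP => // H; exfalso; apply: H.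
    exists e; apply: (dvd_scale (k := -1) (jof_dvd (k%:Z - EE a e))); ring.
have ginj : injective g.
  move=> [a1 e1] [a2 e2] eq; have /= ea := congr1 fst eq; subst a2.
  have ej : jof (k%:Z - EE a1 e1) = jof (k%:Z - EE a1 e2) := congr1 snd eq.
  have h : (V %| EE a1 e1 - EE a1 e2)%Z.
    have := jof_dvd (k%:Z - EE a1 e1); have := jof_dvd (k%:Z - EE a1 e2).
    rewrite -ej => h2 h1.
    apply: (dvd_combN h1 h2); ring.
  by have [_ ->] := EE_inj h.
rewrite card_imset // cardsT card_prod !card_ffun !card_ord card_bool.
by [].
Qed.

Lemma count_none (k : 'I_v) : #|[set t : T | Q t k == None]| = (m ^ n * (v - 2 ^ n))%N.
Proof.
have e : [set t : T | Q t k == None] = ~: [set t : T | Q t k != None].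
  by apply/setP => t; rewrite !inE negbK.
rewrite e; have := cardsC [set t : T | Q t k != None].
rewrite count_some card_prod card_ffun !card_ord => h.
by rewrite mulnBr -h addKn.
Qed.

Lemma C2T s : (1 <= s <= v)%N -> exists t k, Q t k = Some s.
Proof.
case/andP => s1 sv.
pose w := s.-1.
have wv : (w < v)%N by rewrite /w; lia.
pose a0 : A := [ffun _ => Ordinal m0].
pose e0 : Eps := [ffun _ => true].
pose E := EE a0 e0.
exists (a0, jof (w%:Z + E)), (jof (w%:Z + 2 * E)).
have hj := jof_dvd (w%:Z + E); have hk := jof_dvd (w%:Z + 2 * E).
rewrite /Q /=; case: existsP => [_|H]; last first.
  exfalso; apply: H; exists e0; apply: (dvd_combN hk hj); rewrite /E; ring.
congr Some.
have -> : s = w.+1 by rewrite /w; lia.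
congr S; apply: nat_of_dvd => //; first by rewrite /vl ltn_pmod.
have hv := vl_dvd (jof (w%:Z + E)) (jof (w%:Z + 2 * E)).
set j := jof _ in hj hv *; set k := jof _ in hk hv *.
have -> : (vl j k)%:Z - w%:Z = ((vl j k)%:Z - (2 * j%:Z - k%:Z)) + 2 * (j%:Z - (w%:Z + E))
   - (k%:Z - (w%:Z + 2 * E)) by ring.
by rewrite rpredB // rpredD // dvdz_mull.
Qed.

Lemma C3T (t1 t2 : T) (k1 k2 : 'I_v) s :
  (t1, k1) <> (t2, k2) -> Q t1 k1 = Some s -> Q t2 k2 = Some s ->
  [/\ t1 <> t2, k1 <> k2, Q t1 k2 = None & Q t2 k1 = None].
Proof.
case: t1 => a1 j1; case: t2 => a2 j2 ne.
case/Q_some => e1 [h1 ->]; case/Q_some => e2 [h2 /= [ev]].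
rewrite /= in h1 h2.
have hW : (V %| (2 * j1%:Z - k1%:Z) - (2 * j2%:Z - k2%:Z))%Z.
  have := vl_dvd j1 k1; have := vl_dvd j2 k2; rewrite -ev => hb ha.
  apply: (dvd_combN hb ha); ring.
have hW' : (V %| (2 * j2%:Z - k2%:Z) - (2 * j1%:Z - k1%:Z))%Z.
  by apply: (dvd_scale (k := -1) hW); ring.
have [c1 c2] := core h1 h2 hW.
split.
- by move=> et; apply: ne; rewrite (c2 et) et.
- by move=> ek; apply: ne; rewrite -(c1 ek) ek.
- exact: (cross h1 h2 hW ne).
- by apply: (cross h2 h1 hW') => e; apply: ne; rewrite e.
Qed.

End Constr.
Lemma real_part (R : realType) (n v : nat) (q : R) (m : nat) :
  (0 < n)%N -> (0 < v)%N ->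
  q = (v%:R : R) `^ (n%:R)^-1 ->
  3 <= q ->
  Num.floor ((q - 1) / 2) = (m : int) ->
  [/\ (1 <= m)%N, ((2 * m + 1) ^ n <= v)%N & q ^+ n = v%:R].
Proof.
move=> n0 v0 qE q3 fl.
have qn : q ^+ n = v%:R.
  rewrite qE -powR_mulrn ?powR_ge0 // -powRrM mulVf ?powRr1 //.
  by rewrite pnatr_eq0 -lt0n.
have := floor_itv ((q - 1) / 2); rewrite fl => /andP[lo hi].
have m1 : (1 <= m)%N.
  have : (1 : R) < (m%:Z + 1)%:~R.
    apply: le_lt_trans hi. rewrite ler_pdivlMr //. lra.
  rewrite -[1 : R]/((1%:Z)%:~R) ltr_int. lia.
split=> //.
have h1 : ((2 * m + 1)%:R : R) <= q.
  move: lo; rewrite ler_pdivlMr // natrD natrM /=.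
  have -> : (m%:Z)%:~R = (m%:R : R) by [].
  lra.
rewrite -(ler_nat R) natrX -qn lerXn2r // ?nnegrE //.
lra.
Qed.

Lemma pda_exists n m v : (0 < v)%N -> odd v -> (0 < m)%N -> ((2 * m + 1) ^ n <= v)%N ->
  exists P : 'I_(m ^ n * v)%N -> 'I_v -> option nat,
    is_PDA v (m ^ n * v)%N (m ^ n * (v - 2 ^ n))%N v P.
Proof.
move=> v0 vo m0 pv.
have cardT : #|{: {ffun 'I_n -> 'I_m} * 'I_v}| = (m ^ n * v)%N.
  by rewrite card_prod card_ffun !card_ord.
pose f (r : 'I_(m ^ n * v)%N) := enum_val (cast_ord (esym cardT) r).
pose g (t : {ffun 'I_n -> 'I_m} * 'I_v) := cast_ord cardT (enum_rank t).
have fK : cancel f g by move=> r; rewrite /f /g enum_valK cast_ordKV.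
have gK : cancel g f by move=> t; rewrite /f /g cast_ordK enum_rankK.
exists (fun r k => Q (f r) k).
split; last split; last split.
- by move=> j k s; apply: Q_range.
- move=> k.
  have -> : [set j | Q (f j) k == None] = g @: [set t | Q t k == None].
    rewrite (can2_imset_pre _ gK fK); by apply/setP => r; rewrite !inE.
  by rewrite card_imset ?count_none //; apply: can_inj gK.
- move=> s hs; have [t [k hk]] := C2T v0 vo m0 pv hs.
  by exists (g t), k; rewrite gK.
- move=> j1 j2 k1 k2 s ne h1 h2.
  have ne' : (f j1, k1) <> (f j2, k2).
    by case=> /(can_inj fK) e1 e2; apply: ne; rewrite e1 e2.
  have [a b c d] := C3T v0 vo m0 pv ne' h1 h2.
  split => // e; apply: a; by rewrite e.
Qed.

Lemma aux1 (F : fieldType) (a b c : F) : a != 0 -> b != 0 -> a * (b - c) / (a * b) = 1 - c / b.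
Proof. by move=> a0 b0; field; rewrite a0 b0. Qed.

Lemma aux2 (F : fieldType) (a b : F) : a != 0 -> b != 0 -> b / (a * b) = a ^-1.
Proof. by move=> a0 b0; field; rewrite a0 b0. Qed.

Unset Implicit Arguments.

Theorem corollary1 (R : realType) (n v : nat) (q : R) (m : nat) :
  (0 < n)%N -> odd v -> (0 < v)%N ->
  q = (v%:R : R) `^ (n%:R)^-1 ->
  3 <= q ->
  Num.floor ((q - 1) / 2) = (m : int) ->
  exists P : 'I_(m ^ n * v)%N -> 'I_v -> option nat,
    is_PDA v (m ^ n * v)%N (m ^ n * (v - 2 ^ n))%N v P /\
    ((m ^ n * (v - 2 ^ n))%N%:R / (m ^ n * v)%N%:R = 1 - (2 / q) ^+ n :> R) /\
    ((v%:R / (m ^ n * v)%N%:R) = (m%:R : R) ^- n).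
Proof.
move=> n0 vo v0 qE q3 fl.
have [m1 pv qn] := real_part n0 v0 qE q3 fl.
have [P hP] := pda_exists v0 vo m1 pv.
exists P; split => //.
have h2v : (2 ^ n <= v)%N.
  apply: leq_trans pv; rewrite leq_exp2r //; lia.
have mn0 : (m%:R : R) ^+ n != 0 by rewrite expf_eq0 pnatr_eq0; lia.
have vn0 : (v%:R : R) != 0 by rewrite pnatr_eq0; lia.
split.
- rewrite expr_div_n qn !natrM natrB // !natrX; exact: aux1.
- rewrite natrM natrX; exact: aux2.
Qed.
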